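(* Let $K\subseteq L$ be fields, $x=(x_1,\dots,x_n)$, and $H\in L[x]^m$ such that $e_1,\dots,e_s$ are projective image apices of $H$ over $K$. Write $H'=(H_{s+1},\dots,H_m)$. (i) $a\in L^m$ is an image apex of $H$ over $K$ if and only if $(a_{s+1},\dots,a_m)$ is an image apex of $H'$ over $K$. (ii) If $p\in L^m$ has $p_i\ne0$ for some $i>s$, then $p$ is a projective image apex of $H$ over $K$ if and only if $(p_{s+1},\dots,p_m)$ is a projective image apex of $H'$ over $K$. (iii) $\operatorname{trdeg}_K K(H)=\operatorname{trdeg}_K K(H')+s$.
   Context: $e_i$ is the $i$-th standard basis vector. With $y$ a tuple of indeterminates of the appropriate length and $t$ new: $a$ is an image apex of $G$ over $K$ if for all $f\in K[y]$, $f(G)=0\Rightarrow f((1-t)G+ta)=0$; $p$ is a projective image apex of $G$ over $K$ if $p\ne0$ and $f(G)=0\Rightarrow f(G+tp)=0$ for all $f\in K[y]$. $\operatorname{trdeg}_K K(G)$: transcendence degree over $K$ of the field generated by the components of $G$. *)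

(* Defs.v *)
From HB Require Import structures.
From mathcomp Require Import all_boot all_order all_algebra.
From mathcomp Require Import fraction.
Set Implicit Arguments. Unset Strict Implicit. Unset Printing Implicit Defensive.
Import Order.TTheory GRing.Theory Num.Theory.
Local Open Scope ring_scope.

(* Polynomial ring R[x_0,...,x_{n-1}] as iterated univariate polynomials:
   mpoly R (n+1) = (mpoly R n)[x_n]. *)
Fixpoint mpoly (R : idomainType) (n : nat) : idomainType :=
  match n with
  | 0 => R
  | n'.+1 => [the idomainType of {poly (mpoly R n')}]
  end.

Fixpoint mconst (R : idomainType) (n : nat) : R -> mpoly R n :=
  match n return R -> mpoly R n with
  | 0 => fun c => c
  | n'.+1 => fun c => (mconst n' c)%:P : {poly mpoly R n'}
  end.

Fixpoint meval (K : idomainType) (A : comNzRingType) (phi : K -> A) (m : nat)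
  : ('I_m -> A) -> mpoly K m -> A :=
  match m return ('I_m -> A) -> mpoly K m -> A with
  | 0 => fun _ f => phi f
  | m'.+1 => fun v (f : {poly mpoly K m'}) =>
      (map_poly (meval phi (fun i : 'I_m' => v (widen_ord (leqnSn m') i))) f).[v ord_max]
  end.

Section Apex.
Variables (K L : fieldType) (iota : {rmorphism K -> L}) (n m : nat).

Definition coefLx (k : K) : mpoly L n := mconst n (iota k).
Definition coefLxt (k : K) : {poly mpoly L n} := (coefLx k)%:P.

Definition vanishes_at (G : 'I_m -> mpoly L n) (f : mpoly K m) : Prop :=
  meval coefLx G f = 0.

Definition image_apex (G : 'I_m -> mpoly L n) (a : 'I_m -> L) : Prop :=
  forall f : mpoly K m, vanishes_at G f ->
    meval coefLxt
      (fun i => (1 - 'X) * (G i)%:P + 'X * (mconst n (a i))%:P) f = 0.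

Definition proj_image_apex (G : 'I_m -> mpoly L n) (p : 'I_m -> L) : Prop :=
  (exists i, p i != 0) /\
  forall f : mpoly K m, vanishes_at G f ->
    meval coefLxt (fun i => (G i)%:P + 'X * (mconst n (p i))%:P) f = 0.

(* The field Frac(L[x]) in which K(G) lives. *)
Definition FLx := {fraction (mpoly L n)}.
Definition toF (q : mpoly L n) : FLx := @FracField.tofrac (mpoly L n) q.
Definition coefF (k : K) : FLx := toF (coefLx k).

Definition in_KG (G : 'I_m -> mpoly L n) (z : FLx) : Prop :=
  exists f g : mpoly K m,
    meval coefF (fun i => toF (G i)) g != 0 /\
    z = meval coefF (fun i => toF (G i)) f / meval coefF (fun i => toF (G i)) g.

Definition alg_indep (k : nat) (z : 'I_k -> FLx) : Prop :=
  forall f : mpoly K k, meval coefF z f = 0 -> f = 0.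

Definition trdeg_is (G : 'I_m -> mpoly L n) (d : nat) : Prop :=
  (exists z : 'I_d -> FLx, (forall i, in_KG G (z i)) /\ alg_indep z) /\
  (forall (k : nat) (z : 'I_k -> FLx),
      (forall i, in_KG G (z i)) -> alg_indep z -> (k <= d)%N).

End Apex.

Definition std_basis (L : fieldType) (s r : nat) (j : 'I_s) : 'I_(s + r) -> L :=
  fun i => if i == lshift r j then 1 else 0.

(* Main.v *)
Require Import Defs.
From HB Require Import structures.
From mathcomp Require Import all_boot all_order all_algebra.
From mathcomp Require Import fraction ring zify.
From Stdlib Require Import Classical.
Import GRing.Theory.
Local Open Scope ring_scope.
Set Implicit Arguments. Unset Strict Implicit. Unset Printing Implicit Defensive.

Section MevalBasics.
Variable K : idomainType.

Lemma meval_ext (A : comNzRingType) (phi phi' : K -> A) m (v v' : 'I_m -> A) :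
  phi =1 phi' -> v =1 v' -> meval phi v =1 meval phi' v'.
Proof.
elim: m v v' => [|m IH] v v' Hp Hv f /=; first exact: Hp.
rewrite Hv; congr (_.[_]); apply: eq_map_poly => c; apply: IH => // i; exact: Hv.
Qed.

Lemma meval_comp (A B : comNzRingType) (chi : {rmorphism A -> B}) (phi : K -> A) m
   (v : 'I_m -> A) f : chi (meval phi v f) = meval (chi \o phi) (chi \o v) f.
Proof.
elim: m v f => [|m IH] v f //=.
rewrite -horner_map -map_poly_comp; congr (_.[_]); apply: eq_map_poly => c /=.
exact: IH.
Qed.

Fixpoint mevalR (A : comNzRingType) (phi : {rmorphism K -> A}) (m : nat) :
   ('I_m -> A) -> {rmorphism mpoly K m -> A} :=
  match m return ('I_m -> A) -> {rmorphism mpoly K m -> A} with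
  | 0 => fun _ => phi
  | m'.+1 => fun v =>
     (horner_eval (v ord_max) \o map_poly (mevalR phi (fun i : 'I_m' => v (widen_ord (leqnSn m') i))))%FUN
  end.

Lemma mevalRE (A : comNzRingType) (phi : {rmorphism K -> A}) m (v : 'I_m -> A) f :
  mevalR phi v f = meval phi v f.
Proof.
elim: m v f => [|m IH] v f //=.
rewrite horner_evalE; congr (_.[_]); apply: eq_map_poly => c; exact: IH.
Qed.

Fixpoint mconstR (m : nat) : {rmorphism K -> mpoly K m} :=
  match m return {rmorphism K -> mpoly K m} with
  | 0 => idfun
  | m'.+1 => (polyC \o mconstR m')%FUN
  end.

Lemma mconstRE m c : mconstR m c = mconst m c.
Proof. by elim: m => //= m ->. Qed.

End MevalBasics.

Section Vars.
Variable K : idomainType.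

Fixpoint mvar (m : nat) : 'I_m -> mpoly K m :=
  match m return 'I_m -> mpoly K m with
  | 0 => fun _ => 0
  | m'.+1 => fun i =>
     match insub (val i) with
     | Some j => ((mvar j)%:P : {poly mpoly K m'})
     | None => 'X
     end
  end.

Lemma mapPCX (R : nzRingType) (p : {poly R}) : (map_poly polyC p).['X] = p.
Proof.
rewrite horner_coef size_map_polyC.
rewrite -[RHS]coefK poly_def; apply: eq_bigr => i _.
by rewrite coef_map /= mul_polyC.
Qed.

Lemma mevalS (A : comNzRingType) (phi : {rmorphism K -> A}) m (v : 'I_m.+1 -> A) (f : {poly mpoly K m}) :
  meval phi v (f : mpoly K m.+1) =
  (map_poly (mevalR phi (fun i : 'I_m => v (widen_ord (leqnSn m) i))) f).[v ord_max].
Proof. by rewrite /=; congr (_.[_]); apply: eq_map_poly => c; rewrite mevalRE. Qed.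

Lemma meval_var (A : comNzRingType) (phi : {rmorphism K -> A}) m (v : 'I_m -> A) i :
  meval phi v (mvar i) = v i.
Proof.
elim: m v i => [|m IH] v i; first by case: i.
rewrite mevalS /=; case: insubP => [j Hj Ej|Hi].
  rewrite map_polyC hornerC /= mevalRE IH; congr v; apply: val_inj => /=.
  by rewrite Ej.
rewrite map_polyX hornerX; congr v; apply: val_inj => /=.
by move: (ltn_ord i) Hi; rewrite ltnS leq_eqVlt => /orP[/eqP|->].
Qed.

Lemma meval_mconst (A : comNzRingType) (phi : {rmorphism K -> A}) m (v : 'I_m -> A) c :
  meval phi v (mconst m c) = phi c.
Proof.
elim: m v => [|m IH] v //.
by rewrite mevalS map_polyC hornerC /= mevalRE IH.
Qed.

Lemma mvar_widen m (j : 'I_m) : mvar (widen_ord (leqnSn m) j) = (mvar j)%:P :> mpoly K m.+1.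
Proof.
rewrite /=; case: insubP => [j' _ Ej|]; last by rewrite /= ltn_ord.
by congr (mvar _)%:P; apply: val_inj.
Qed.

Lemma mvar_max m : @mvar m.+1 ord_max = 'X.
Proof. by rewrite /=; case: insubP => [j|]; [rewrite /= ltnn|]. Qed.

Lemma meval_id m f : meval (mconst m) (@mvar m) f = f.
Proof.
elim: m f => [|m IH] f //.
rewrite (meval_ext (phi' := mconstR K m.+1) (v' := @mvar m.+1)) //; last first.
  by move=> c; rewrite mconstRE.
rewrite mevalS mvar_max.
rewrite (eq_map_poly (g := polyC)) ?mapPCX // => c.
rewrite mevalRE (meval_ext (phi' := polyC \o mconstR K m) (v' := polyC \o (@mvar m))).
- rewrite -meval_comp /= (meval_ext (phi' := mconst m) (v' := @mvar m)) ?IH // => x; by rewrite mconstRE.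
- by [].
- by move=> i; rewrite mvar_widen.
Qed.

Lemma mevalR_mconst (A : comNzRingType) (phi : {rmorphism K -> A}) m (v : 'I_m -> A) c :
  mevalR phi v (mconst m c) = phi c.
Proof. by rewrite mevalRE meval_mconst. Qed.

Lemma mevalR_mconstR (A : comNzRingType) (phi : {rmorphism K -> A}) m (v : 'I_m -> A) c :
  mevalR phi v (mconstR K m c) = phi c.
Proof. by rewrite mevalRE mconstRE meval_mconst. Qed.

Lemma mevalR_var (A : comNzRingType) (phi : {rmorphism K -> A}) m (v : 'I_m -> A) i :
  mevalR phi v (mvar i) = v i.
Proof. by rewrite mevalRE meval_var. Qed.

End Vars.

Section Shift.
Variable K : idomainType.
Variable m : nat.

Definition shiftpt (R : nzRingType) (P : 'I_m -> R) (j : 'I_m) (c : R) : 'I_m -> R :=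
  fun i => P i + (if i == j then c else 0).

Definition shiftpoly (j : 'I_m) (f : mpoly K m) : {poly mpoly K m} :=
  meval (polyC \o mconst m) (shiftpt (fun i => (@mvar K m i)%:P) j 'X) f.

Lemma shift_expand (B : comNzRingType) (psi : {rmorphism K -> B}) (P : 'I_m -> B)
   (j : 'I_m) (c : B) f :
  meval psi (shiftpt P j c) f =
  \sum_(k < size (shiftpoly j f)) meval psi P ((shiftpoly j f)`_k) * c ^+ k.
Proof.
pose chi : {rmorphism {poly mpoly K m} -> B} :=
  (horner_eval c \o map_poly (mevalR psi P))%FUN.
have E1 : chi (shiftpoly j f) = meval psi (shiftpt P j c) f.
  rewrite /shiftpoly meval_comp; apply: meval_ext => [a|i] /=.
    rewrite horner_evalE map_polyC hornerC.
    exact: (etrans (mevalRE _ _ _) (meval_mconst _ _ _)).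
  rewrite /shiftpt rmorphD /= !horner_evalE hornerD map_polyC hornerC.
  congr (_ + _); first exact: (etrans (mevalRE _ _ _) (meval_var _ _ _)).
  by case: eqP => _; rewrite ?map_polyX ?hornerX ?rmorph0 ?horner0.
have Hs : forall (R S : nzSemiRingType) (g : R -> S) (p : {poly R}), (size (map_poly g p) <= size p)%N.
  by move=> R S g p; rewrite /map_poly size_poly.
rewrite -E1 /= horner_evalE (horner_coef_wide _ (Hs _ _ _ _)).
apply: eq_bigr => k _; rewrite coef_map; congr (_ * _).
exact: mevalRE.
Qed.
End Shift.

Section PF.
Variable K : idomainType.
Variable m : nat.
Variable A : comNzRingType.
Variable phi : {rmorphism K -> A}.
Variable G : 'I_m -> A.

Definition apexj (j : 'I_m) := forall f : mpoly K m, meval phi G f = 0 ->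
  meval (polyC \o phi) (shiftpt (fun i => (G i)%:P) j 'X) f = 0.

Lemma hasse_ker j f : apexj j -> meval phi G f = 0 ->
  forall k, meval phi G ((shiftpoly j f)`_k) = 0.
Proof.
move=> Hj Hf k.
have E : map_poly (mevalR phi G) (shiftpoly j f) =
         meval (polyC \o phi) (shiftpt (fun i => (G i)%:P) j 'X) f.
  rewrite /shiftpoly meval_comp; apply: meval_ext => [a|i] /=.
    rewrite map_polyC /=; congr (_%:P).
    exact: (etrans (mevalRE _ _ _) (meval_mconst _ _ _)).
  rewrite /shiftpt rmorphD /= map_polyC /=; congr (_ + _).
    congr (_%:P); exact: (etrans (mevalRE _ _ _) (meval_var _ _ _)).
  by case: eqP => _; rewrite ?map_polyX ?rmorph0.
have := congr1 (fun p : {poly A} => p`_k) E; rewrite Hj // coef0 coef_map /=.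
by move=> <-; rewrite mevalRE.
Qed.

Lemma PF_seq (B : comNzRingType) (chi : {rmorphism A -> B}) (js : seq 'I_m) :
  (forall j, j \in js -> apexj j) ->
  forall (c : 'I_m -> B) f, meval phi G f = 0 ->
  meval (chi \o phi) (fun i => chi (G i) + \sum_(j <- js) (if i == j then c j else 0)) f = 0.
Proof.
elim: js => [|j js IH] Hjs c f Hf.
  rewrite (meval_ext (phi' := chi \o phi) (v' := chi \o G)) //; last first.
    by move=> i; rewrite big_nil addr0.
  by rewrite -meval_comp Hf rmorph0.
pose psi : {rmorphism K -> B} := (chi \o phi)%FUN.
rewrite (meval_ext (phi' := psi)
   (v' := shiftpt (fun i => chi (G i) + \sum_(j <- js) (if i == j then c j else 0)) j (c j))) //; last first.
  by move=> i; rewrite /shiftpt big_cons addrA addrAC.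
rewrite shift_expand big1 // => k _.
rewrite IH ?mul0r //; first by move=> j' Hj'; apply: Hjs; rewrite inE Hj' orbT.
by apply: hasse_ker => //; apply: Hjs; rewrite inE eqxx.
Qed.

Lemma sum_pick (B : nzRingType) (js : seq 'I_m) (c : 'I_m -> B) i : uniq js ->
  \sum_(j <- js) (if i == j then c j else 0) = if i \in js then c i else 0.
Proof.
elim: js => [|j js IH] /=; first by rewrite big_nil.
move=> /andP[Hj Hu]; rewrite big_cons IH // inE.
case: (eqVneq i j) => [->|_] /=; last by rewrite add0r.
by rewrite (negbTE Hj) addr0.
Qed.

Lemma PF (B : comNzRingType) (chi : {rmorphism A -> B}) (js : seq 'I_m) :
  uniq js -> (forall j, j \in js -> apexj j) ->
  forall (w : 'I_m -> B) f, meval phi G f = 0 ->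
  meval (chi \o phi) (fun i => if i \in js then w i else chi (G i)) f = 0.
Proof.
move=> Hu Hjs w f Hf.
rewrite (meval_ext (phi' := chi \o phi)
  (v' := fun i => chi (G i) + \sum_(j <- js) (if i == j then (w j - chi (G j)) else 0))) //.
  exact: PF_seq.
move=> i; rewrite sum_pick //.
case: ifP => _; last by rewrite addr0.
by rewrite addrC subrK.
Qed.

End PF.

Section MZero.
Variable A : idomainType.

Fixpoint mzero (C : Type) (psi : A -> C) (z : C) (s : nat) : mpoly A s -> Prop :=
  match s return mpoly A s -> Prop with
  | 0 => fun g => psi g = z
  | s'.+1 => fun g : {poly mpoly A s'} => forall k, mzero psi z (g`_k)
  end.

Lemma mzero_meval (C : comNzRingType) (psi : {rmorphism A -> C}) s (g : mpoly A s) :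
  mzero psi 0 g -> forall w, meval psi w g = 0.
Proof.
elim: s g => [|s IH] g //= Hg w.
rewrite horner_coef big1 // => k _; rewrite coef_map_id0; last first.
  by rewrite -mevalRE rmorph0.
by rewrite (IH (g`_k) (Hg k)) mul0r.
Qed.

Lemma mzero_mono (C C' : Type) (psi : A -> C) (psi' : A -> C') z z' s (g : mpoly A s) :
  (forall c, psi c = z -> psi' c = z') -> mzero psi z g -> mzero psi' z' g.
Proof. by move=> H; elim: s g => [|s IH] g /=; [apply: H|move=> Hg k; apply: IH]. Qed.

Lemma generic_mzero (B : idomainType) (psi : {rmorphism A -> B}) s (g : mpoly A s) :
  meval (mconstR B s \o psi) (@mvar B s) g = 0 -> mzero psi 0 g.
Proof.
elim: s g => [|s IH] g Hg; first exact: Hg.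
move=> k; apply: IH.
have E : meval (mconstR B s.+1 \o psi) (@mvar B s.+1) g =
         map_poly (meval (mconstR B s \o psi) (@mvar B s)) g.
  rewrite mevalS mvar_max -[RHS]mapPCX -map_poly_comp_id0 ?rmorph0 //.
  congr (_.[_]); apply: eq_map_poly => c /=.
  rewrite mevalRE (meval_ext (phi' := polyC \o (mconstR B s \o psi)) (v' := polyC \o (@mvar B s))) //.
    by rewrite -meval_comp.
  move=> i; exact: mvar_widen.
have := congr1 (fun p : {poly mpoly B s} => p`_k) E; rewrite Hg coef0 coef_map_id0 //.
by rewrite -mevalRE rmorph0.
Qed.

Lemma mzero_id s (g : mpoly A s) : mzero id 0 g -> g = 0.
Proof.
elim: s g => [|s IH] g //= Hg.
by apply/polyP => k; rewrite coef0; apply: IH.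
Qed.

End MZero.

Section Split.
Variable K : idomainType.
Variables (m a b : nat) (sigma : 'I_m -> 'I_a + 'I_b).

Definition splitp (f : mpoly K m) : mpoly (mpoly K a) b :=
  meval (mconstR (mpoly K a) b \o mconstR K a)
    (fun i => match sigma i with inl j => mconst b (mvar K j) | inr j => mvar (mpoly K a) j end) f.

Lemma splitpE (C : comNzRingType) (phi : {rmorphism K -> C}) (u : 'I_a -> C) (v : 'I_b -> C) f :
  meval phi (fun i => match sigma i with inl j => u j | inr j => v j end) f =
  meval (mevalR phi u) v (splitp f).
Proof.
rewrite -[RHS]mevalRE /splitp meval_comp; apply: meval_ext => [c|i] /=.
  by rewrite !mevalR_mconstR.
case: (sigma i) => j /=.
  by rewrite mevalR_mconst mevalR_var.
by rewrite mevalR_var.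
Qed.

Lemma splitp_inj (tau1 : 'I_a -> 'I_m) (tau2 : 'I_b -> 'I_m) f :
  (forall i, match sigma i with inl j => tau1 j | inr j => tau2 j end = i) ->
  splitp f = 0 -> f = 0.
Proof.
move=> Ht H0.
rewrite -(meval_id f) (meval_ext (phi' := mconstR K m)
   (v' := fun i => match sigma i with inl j => mvar K (tau1 j) | inr j => mvar K (tau2 j) end)).
- by rewrite splitpE H0 -mevalRE rmorph0.
- by move=> c; rewrite mconstRE.
- by move=> i; rewrite -[in LHS](Ht i); case: (sigma i).
Qed.

End Split.

Lemma split_rshift m n (j : 'I_n) : split (rshift m j) = inr j.
Proof. exact: (unsplitK (inr j)). Qed.
Lemma split_lshift m n (j : 'I_m) : split (lshift n j) = inl j.
Proof. exact: (unsplitK (inl j)). Qed.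

Section Core.
Variables (K A : idomainType) (phi : {rmorphism K -> A}) (s r : nat).
Variable G : 'I_(s + r) -> A.

Definition swapsig (i : 'I_(s + r)) : 'I_r + 'I_s :=
  match split i with inl j => inr j | inr j => inl j end.

Definition lefts : seq 'I_(s + r) := [seq lshift r j | j <- enum 'I_s].

Lemma lefts_uniq : uniq lefts.
Proof. rewrite map_inj_uniq ?enum_uniq //; exact: lshift_inj. Qed.

Lemma mem_lefts i : (i \in lefts) = (i < s)%N.
Proof.
apply/mapP/idP => [[j _ ->]|Hi]; first by rewrite /= ltn_ord.
by exists (Ordinal Hi); rewrite ?mem_enum //; apply: val_inj.
Qed.

Lemma pt_case (T : Type) (P : 'I_(s + r) -> T) (i : 'I_(s + r)) :
  match swapsig i with inl j => P (rshift s j) | inr j => P (lshift r j) end = P i.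
Proof.
rewrite /swapsig; case: splitP => j Hj; congr P; apply: val_inj => //=.
Qed.

Lemma core12 :
  (forall j : 'I_s, apexj phi G (lshift r j)) ->
  forall f, meval phi G f = 0 ->
  forall (C : comNzRingType) (phi' : {rmorphism K -> C}) (Q : 'I_(s + r) -> C),
  (forall g : mpoly K r, meval phi (fun i => G (rshift s i)) g = 0 ->
                         meval phi' (fun i => Q (rshift s i)) g = 0) ->
  meval phi' Q f = 0.
Proof.
move=> Hap f Hf C phi' Q HQ.
have Hjs : forall j, j \in lefts -> apexj phi G j.
  by move=> j /mapP[j' _ ->]; apply: Hap.
have H1 := PF (mconstR A s) lefts_uniq Hjs
   (fun i => match split i with inl j => mvar A j | inr _ => 0 end) Hf.
rewrite (meval_ext (phi' := mconstR A s \o phi)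
   (v' := fun i => match swapsig i with inl j => mconstR A s (G (rshift s j)) | inr j => mvar A j end))
   // in H1; last first.
  move=> i; rewrite mem_lefts /swapsig.
  case: splitP => j Hj //; congr (mconstR A s (G _)); exact: val_inj.
rewrite splitpE in H1.
have H2 : mzero (mevalR phi (fun i => G (rshift s i))) 0 (splitp swapsig f).
  apply: generic_mzero.
  apply: (etrans _ H1); apply: meval_ext => // c /=.
  by rewrite !mevalRE meval_comp.
have H3 : mzero (mevalR phi' (fun i => Q (rshift s i))) 0 (splitp swapsig f).
  apply: mzero_mono H2 => c; rewrite !mevalRE; exact: HQ.
have H4 := mzero_meval H3 (fun j => Q (lshift r j)).
rewrite -splitpE in H4.
apply: (etrans _ H4); apply: meval_ext => // i.
by rewrite pt_case.
Qed.

Lemma core3 (d : nat) (sg : 'I_d -> 'I_r) :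
  (forall j : 'I_s, apexj phi G (lshift r j)) ->
  (forall g : mpoly K d, meval phi (fun i => G (rshift s (sg i))) g = 0 -> g = 0) ->
  forall Phi : mpoly K (d + s),
  meval phi (fun i => match split i with inl j => G (rshift s (sg j)) | inr j => G (lshift r j) end) Phi = 0 ->
  Phi = 0.
Proof.
move=> Hap Hind Phi H0.
pose f : mpoly K (s + r) := meval (mconstR K (s + r))
  (fun i => match split i with inl j => mvar K (rshift s (sg j)) | inr j => mvar K (lshift r j) end) Phi.
have Hf : meval phi G f = 0.
  apply: (etrans _ H0); rewrite -mevalRE meval_comp; apply: meval_ext => [c|i] /=.
    by rewrite mevalR_mconstR.
  by case: (split i) => j; rewrite mevalR_var.
pose Q := fun i : 'I_(s + r) => match split i with inl j => mvar A j | inr j => mconstR A s (G (rshift s j)) end.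
have H1 := core12 Hap Hf (phi' := mconstR A s \o phi) (Q := Q).
have H2 : meval (mconstR A s \o phi) Q f = 0.
  apply: H1 => g Hg; rewrite (meval_ext (phi' := mconstR A s \o phi) (v' := mconstR A s \o (fun i => G (rshift s i)))) //.
    by rewrite -meval_comp Hg rmorph0.
  by move=> i; rewrite /Q split_rshift /=.
have H3 : meval (mconstR A s \o phi) (fun i => match split i with
     inl j => mconstR A s (G (rshift s (sg j))) | inr j => mvar A j end) Phi = 0.
  apply: (etrans _ H2); rewrite /f -[RHS]mevalRE meval_comp.
  apply: meval_ext => [c|i] /=; first by rewrite mevalR_mconstR.
  by case: (split i) => j; rewrite mevalR_var /Q ?split_rshift ?split_lshift.
rewrite splitpE in H3.
have H4 : mzero (mevalR phi (fun j => G (rshift s (sg j)))) 0 (splitp split Phi).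
  apply: generic_mzero; apply: (etrans _ H3); apply: meval_ext => // c /=.
  by rewrite !mevalRE meval_comp.
have H5 : mzero id 0 (splitp split Phi).
  by apply: mzero_mono H4 => c; rewrite mevalRE; exact: Hind.
have Ht : forall i : 'I_(d + s), match split i with inl j => lshift s j | inr j => rshift d j end = i.
  by move=> i; rewrite -[RHS](splitK i); case: (split i).
exact: (splitp_inj Ht (mzero_id H5)).
Qed.

End Core.

Lemma relabelE (K : idomainType) (C : comNzRingType) (psi : {rmorphism K -> C}) a b
   (tau : 'I_a -> 'I_b) (P : 'I_b -> C) (g : mpoly K a) :
  meval psi P (meval (mconstR K b) (fun i => mvar K (tau i)) g) = meval psi (fun i => P (tau i)) g.
Proof.
rewrite -mevalRE meval_comp; apply: meval_ext => [c|i] /=.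
  by rewrite mevalR_mconstR.
by rewrite mevalR_var.
Qed.

Section Main12.
Variables (K L : fieldType) (iota : {rmorphism K -> L}) (n s r : nat).
Variable H : 'I_(s + r) -> mpoly L n.

Definition phiL : {rmorphism K -> mpoly L n} := (mconstR L n \o iota)%FUN.

Lemma coefLxE : coefLx iota n =1 phiL.
Proof. by move=> c; rewrite /coefLx /phiL /= mconstRE. Qed.

Lemma coefLxtE : coefLxt iota n =1 (polyC \o phiL).
Proof. by move=> c; rewrite /coefLxt /= coefLxE. Qed.

Lemma apex_conv (j : 'I_s) :
  proj_image_apex iota H (@std_basis L s r j) -> apexj phiL H (lshift r j).
Proof.
move=> [_ Hj] f Hf.
have Hf' : vanishes_at iota H f.
  by rewrite /vanishes_at (meval_ext (phi' := phiL) (v' := H)) //; exact: coefLxE.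
rewrite -(Hj f Hf'); apply: meval_ext => [c|i] /=; first by rewrite coefLxtE.
rewrite /shiftpt /std_basis; case: eqP => _.
  by rewrite -mconstRE rmorph1 mulr1.
by rewrite -mconstRE rmorph0 mulr0.
Qed.


Hypothesis hH : forall j : 'I_s, proj_image_apex iota H (@std_basis L s r j).

Let Hap : forall j : 'I_s, apexj phiL H (lshift r j).
Proof. by move=> j; apply: apex_conv. Qed.

Lemma transfer_down (P : 'I_(s + r) -> {poly mpoly L n}) :
  (forall f, vanishes_at iota H f -> meval (coefLxt iota n) P f = 0) ->
  forall g : mpoly K r, vanishes_at iota (fun i => H (rshift s i)) g ->
    meval (coefLxt iota n) (fun i => P (rshift s i)) g = 0.
Proof.
move=> HP g Hg.
pose f := meval (mconstR K (s + r)) (fun i => mvar K (rshift s i)) g.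
have Hf : vanishes_at iota H f.
  rewrite /vanishes_at (meval_ext (phi' := phiL) (v' := H)) //; last exact: coefLxE.
  rewrite relabelE -[RHS]Hg; apply: meval_ext => // c; by rewrite coefLxE.
have := HP f Hf; rewrite (meval_ext (phi' := polyC \o phiL) (v' := P)) //; last exact: coefLxtE.
rewrite relabelE => <-; apply: meval_ext => // c; by rewrite coefLxtE.
Qed.

Lemma transfer_up (P : 'I_(s + r) -> {poly mpoly L n}) :
  (forall g : mpoly K r, vanishes_at iota (fun i => H (rshift s i)) g ->
    meval (coefLxt iota n) (fun i => P (rshift s i)) g = 0) ->
  (forall f, vanishes_at iota H f -> meval (coefLxt iota n) P f = 0).
Proof.
move=> HP f Hf.
have Hf' : meval phiL H f = 0.
  by rewrite -[RHS]Hf; apply: meval_ext => // c; rewrite coefLxE.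
rewrite (meval_ext (phi' := polyC \o phiL) (v' := P)) //; last exact: coefLxtE.
apply: (core12 Hap Hf' (phi' := (polyC \o phiL)%FUN)) => g Hg.
have Hg' : vanishes_at iota (fun i => H (rshift s i)) g.
  by rewrite /vanishes_at -[RHS]Hg; apply: meval_ext => // c; rewrite coefLxE.
rewrite -[RHS](HP g Hg'); apply: meval_ext => // c; by rewrite coefLxtE.
Qed.

Lemma part1 (a : 'I_(s + r) -> L) :
  image_apex iota H a <->
  image_apex iota (fun i : 'I_r => H (rshift s i)) (fun i => a (rshift s i)).
Proof.
split => Ha; first exact: (transfer_down Ha).
exact: (transfer_up Ha).
Qed.

Lemma part2 (p : 'I_(s + r) -> L) : (exists i : 'I_r, p (rshift s i) != 0) ->
  (proj_image_apex iota H p <->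
   proj_image_apex iota (fun i : 'I_r => H (rshift s i)) (fun i => p (rshift s i))).
Proof.
move=> Hp; split => [[_ Ha]|[_ Ha]]; split => //.
- exact: (transfer_down Ha).
- by case: Hp => i Hi; exists (rshift s i).
- exact: (transfer_up Ha).
Qed.

End Main12.

Section Gen.
Variables (K : fieldType) (E : fieldType) (kappa : {rmorphism K -> E}).

Lemma gen_closure (P : E -> Prop) :
  (forall c, P (kappa c)) -> (forall a b, P a -> P b -> P (a + b)) ->
  (forall a b, P a -> P b -> P (a * b)) ->
  forall p (x : 'I_p -> E), (forall i, P (x i)) -> forall g, P (meval kappa x g).
Proof.
move=> Hc Ha Hm; elim=> [|p IH] x Hx g; first exact: Hc.
have Hs : (size (map_poly (mevalR kappa (fun i => x (widen_ord (leqnSn p) i))) g) <= size g)%N.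
  by rewrite /map_poly size_poly.
rewrite mevalS (horner_coef_wide _ Hs).
have P0 : P 0 by rewrite -(rmorph0 kappa).
have P1 : P 1 by rewrite -(rmorph1 kappa).
have Xk : forall t, P (x ord_max ^+ t).
  by elim=> [|t IHt]; rewrite ?expr0 // exprS; apply: Hm.
apply: (big_ind P) => // k _; apply: Hm => //.
by rewrite coef_map_id0 ?rmorph0 //= mevalRE; apply: IH.
Qed.

Definition inP p (x : 'I_p -> E) y := exists f, y = meval kappa x f.
Definition inK p (x : 'I_p -> E) y := exists f g,
  meval kappa x g != 0 /\ y = meval kappa x f / meval kappa x g.
Definition indep p (x : 'I_p -> E) := forall f : mpoly K p, meval kappa x f = 0 -> f = 0.

Lemma inP_inK p (x : 'I_p -> E) y : inP x y -> inK x y.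
Proof.
case=> f ->; exists f, 1; rewrite -!mevalRE rmorph1 divr1; split=> //; exact: oner_neq0.
Qed.

Lemma inP_var p (x : 'I_p -> E) i : inP x (x i).
Proof. by exists (mvar K i); rewrite meval_var. Qed.

Lemma inP_const p (x : 'I_p -> E) c : inP x (kappa c).
Proof. by exists (mconst p c); rewrite meval_mconst. Qed.

Lemma inP_add p (x : 'I_p -> E) a b : inP x a -> inP x b -> inP x (a + b).
Proof. by case=> f -> [g ->]; exists (f + g); rewrite -!mevalRE rmorphD. Qed.

Lemma inP_mul p (x : 'I_p -> E) a b : inP x a -> inP x b -> inP x (a * b).
Proof. by case=> f -> [g ->]; exists (f * g); rewrite -!mevalRE rmorphM. Qed.

Lemma inK_const p (x : 'I_p -> E) c : inK x (kappa c).
Proof. apply: inP_inK; exact: inP_const. Qed.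

Lemma inK_add p (x : 'I_p -> E) a b : inK x a -> inK x b -> inK x (a + b).
Proof.
case=> f1 [g1 [h1 ->]] [f2 [g2 [h2 ->]]].
exists (f1 * g2 + f2 * g1), (g1 * g2); rewrite -!mevalRE !rmorphD !rmorphM /=.
rewrite !mevalRE; split; first by rewrite mulf_neq0.
by field; apply/andP.
Qed.

Lemma inK_mul p (x : 'I_p -> E) a b : inK x a -> inK x b -> inK x (a * b).
Proof.
case=> f1 [g1 [h1 ->]] [f2 [g2 [h2 ->]]].
exists (f1 * f2), (g1 * g2); rewrite -!mevalRE !rmorphM /= !mevalRE.
split; first by rewrite mulf_neq0.
by field; apply/andP.
Qed.

Lemma inK_div p (x : 'I_p -> E) a b : inK x a -> inK x b -> b != 0 -> inK x (a / b).
Proof.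
case=> f1 [g1 [h1 ->]] [f2 [g2 [h2 ->]]] hb.
have hf2 : meval kappa x f2 != 0.
  by apply: contraNneq hb => ->; rewrite mul0r.
exists (f1 * g2), (g1 * f2); rewrite -!mevalRE !rmorphM /= !mevalRE.
split; first by rewrite mulf_neq0.
by field; rewrite h1 h2 hf2.
Qed.

Lemma inK_subst p (x : 'I_p -> E) q (G : 'I_q -> E) :
  (forall j, inK x (G j)) -> forall f, inK x (meval kappa G f).
Proof.
move=> HG; apply: gen_closure => //; [exact: inK_const|exact: inK_add|exact: inK_mul].
Qed.

Lemma inP_subst p (x : 'I_p -> E) q (G : 'I_q -> E) :
  (forall j, inP x (G j)) -> forall f, inP x (meval kappa G f).
Proof.
move=> HG; apply: gen_closure => //; [exact: inP_const|exact: inP_add|exact: inP_mul].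
Qed.

End Gen.

Section Alg.
Variables (K : fieldType) (E : fieldType) (kappa : {rmorphism K -> E}).

Definition AlgOver p (w : 'I_p -> E) (y : E) := exists P : {poly mpoly K p},
  meval kappa w (lead_coef P) != 0 /\ (map_poly (meval kappa w) P).[y] = 0.

Definition rel p q (tau : 'I_p -> 'I_q) (g : mpoly K p) : mpoly K q :=
  meval (mconstR K q) (fun i => mvar K (tau i)) g.

Lemma rel0 p q (tau : 'I_p -> 'I_q) : rel tau 0 = 0.
Proof. by rewrite /rel -mevalRE rmorph0. Qed.

Lemma meval0 p (w : 'I_p -> E) : meval kappa w 0 = 0.
Proof. by rewrite -mevalRE rmorph0. Qed.

Lemma alg_relabel p q (tau : 'I_p -> 'I_q) (w : 'I_q -> E) y :
  AlgOver (fun i => w (tau i)) y -> AlgOver w y.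
Proof.
case=> P [HP1 HP2].
have Hrel : forall g, meval kappa w (rel tau g) = meval kappa (fun i => w (tau i)) g.
  by move=> g; rewrite /rel relabelE.
have Hl : rel tau (lead_coef P) != 0.
  by apply: contraNneq HP1 => H0; rewrite -Hrel H0 meval0.
exists (map_poly (rel tau) P); split.
  by rewrite lead_coef_map_id0 ?rel0 // Hrel.
rewrite -map_poly_comp_id0 ?meval0 // -[RHS]HP2; congr (_.[_]).
by apply: eq_map_poly => g /=; rewrite Hrel.
Qed.

Lemma map_meval p (w : 'I_p -> E) (P : {poly mpoly K p}) :
  map_poly (meval kappa w) P = map_poly (mevalR kappa w) P.
Proof. by apply: eq_map_poly => c; rewrite mevalRE. Qed.

Lemma alg_var p (w : 'I_p -> E) i : AlgOver w (w i).
Proof.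
exists ('X - (mvar K i)%:P); rewrite lead_coefXsubC; split.
  by rewrite -mevalRE rmorph1 oner_neq0.
by rewrite map_meval map_polyXsubC hornerXsubC mevalR_var subrr.
Qed.

Definition extd d (w : 'I_d -> E) (y : E) : 'I_d.+1 -> E :=
  fun i => if unlift ord_max i is Some j then w j else y.

Lemma alg_ext p (w w' : 'I_p -> E) y : w =1 w' -> AlgOver w y -> AlgOver w' y.
Proof.
move=> Hw [P [H1 H2]]; exists P.
rewrite -(meval_ext (phi := kappa) (phi' := kappa) (v := w) (v' := w')) //; split => //.
rewrite -[RHS]H2; congr (_.[_]); apply: eq_map_poly => c.
by apply: meval_ext.
Qed.

Lemma lift_max_widen d (j : 'I_d) : lift ord_max j = widen_ord (leqnSn d) j.
Proof. by apply: val_inj; rewrite /= /bump leqNgt ltn_ord. Qed.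

Lemma extd_widen d (w : 'I_d -> E) y j : extd w y (widen_ord (leqnSn d) j) = w j.
Proof.
rewrite /extd (_ : widen_ord _ j = lift ord_max j) ?liftK //.
by apply: val_inj; rewrite /= /bump leqNgt ltn_ord.
Qed.

Lemma extd_max d (w : 'I_d -> E) y : extd w y ord_max = y.
Proof. by rewrite /extd unlift_none. Qed.

Lemma meval_extd d (w : 'I_d -> E) y (f : {poly mpoly K d}) :
  meval kappa (extd w y) (f : mpoly K d.+1) = (map_poly (meval kappa w) f).[y].
Proof.
rewrite mevalS extd_max; congr (_.[_]); apply: eq_map_poly => c.
by rewrite mevalRE; apply: meval_ext => // i; rewrite extd_widen.
Qed.

Lemma indep0 (x : 'I_0 -> E) : indep kappa x.
Proof. by move=> f /= /eqP; rewrite fmorph_eq0 => /eqP. Qed.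

Lemma max_sub p (x : 'I_p -> E) : exists d (sg : 'I_d -> 'I_p),
  indep kappa (fun i => x (sg i)) /\ forall j, AlgOver (fun i => x (sg i)) (x j).
Proof.
elim: p x => [|p IH] x.
  by exists 0, (fun i => i); split; [exact: indep0|case].
pose x' := fun i : 'I_p => x (widen_ord (leqnSn p) i).
have [d [sg [Hi Ha]]] := IH x'.
pose w := fun i => x' (sg i).
case: (classic (indep kappa (extd w (x ord_max)))) => [Hi2|Hni].
  pose sg' := fun i : 'I_d.+1 => if unlift ord_max i is Some j then widen_ord (leqnSn p) (sg j) else ord_max.
  have Ew : (fun i => x (sg' i)) =1 extd w (x ord_max).
    by move=> i; rewrite /sg' /extd; case: (unlift ord_max i).
  exists d.+1, sg'; split.
    by move=> f Hf; apply: Hi2; rewrite -[RHS]Hf; apply: meval_ext.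
  move=> j; apply: (alg_ext (w := extd w (x ord_max))); first by move=> i; rewrite Ew.
  case: (unliftP ord_max j) => [j0 ->|->]; last first.
    by rewrite -{2}(extd_max w (x ord_max)); apply: alg_var.
  rewrite lift_max_widen.
  apply: (alg_relabel (tau := widen_ord (leqnSn d))).
  by apply: (alg_ext (w := w)) => [i|]; [rewrite extd_widen|apply: Ha].
have [f [Hf Hf0]] : exists f, meval kappa (extd w (x ord_max)) f = 0 /\ f <> 0.
  apply: NNPP => Hne; apply: Hni => f Hf; apply: NNPP => Hf0; apply: Hne; by exists f.
have Hy : AlgOver w (x ord_max).
  exists f; split; last by rewrite -meval_extd.
  apply: contra_notN Hf0 => /eqP /Hi /eqP; rewrite lead_coef_eq0 => /eqP.
  done.
exists d, (fun i => widen_ord (leqnSn p) (sg i)); split; first exact: Hi.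
move=> j; case: (unliftP ord_max j) => [j0 ->|->]; last exact: Hy.
rewrite lift_max_widen; exact: Ha.
Qed.

End Alg.

Section Count.
Variables (K : fieldType) (E : fieldType) (kappa : {rmorphism K -> E}).
Variables (N M : nat) (u : 'I_N -> E) (v : 'I_M -> E) (e Delta : nat).

Definition monval (al : 'I_N -> nat) (be : 'I_M -> nat) : E :=
  (\prod_i u i ^+ al i) * (\prod_j v j ^+ be j).

Inductive Ws (R : nat) : E -> Prop :=
| Ws0 : Ws R 0
| WsM (al : 'I_N -> nat) (be : 'I_M -> nat) (c : K) (y : E) :
    (forall i, (al i <= R)%N) -> (forall j, (be j < e)%N) -> Ws R y ->
    Ws R (kappa c * monval al be + y).

Inductive Wu : E -> Prop :=
| Wu0 : Wu 0
| WuM (ga : 'I_N -> nat) (c : K) (y : E) :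
    (forall i, (ga i <= Delta)%N) -> Wu y -> Wu (kappa c * \prod_i u i ^+ ga i + y).

Lemma Ws_add R a b : Ws R a -> Ws R b -> Ws R (a + b).
Proof.
elim=> [|al be c y Ha Hb Hy IH] Hb'; first by rewrite add0r.
by rewrite -addrA; apply: WsM => //; apply: IH.
Qed.

Lemma Ws_scale R c a : Ws R a -> Ws R (kappa c * a).
Proof.
elim=> [|al be c' y Ha Hb Hy IH]; first by rewrite mulr0; exact: Ws0.
by rewrite mulrDr mulrA -rmorphM; apply: WsM.
Qed.

Lemma Ws_mono R R' a : (R <= R')%N -> Ws R a -> Ws R' a.
Proof.
move=> HR; elim=> [|al be c y Ha Hb Hy IH]; first exact: Ws0.
by apply: WsM => // i; apply: leq_trans (Ha i) HR.
Qed.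

Lemma Ws_mon R al be : (forall i, (al i <= R)%N) -> (forall j, (be j < e)%N) -> Ws R (monval al be).
Proof.
move=> Ha Hb; rewrite -[monval _ _]addr0 -[monval _ _]mul1r -(rmorph1 kappa).
by apply: WsM => //; exact: Ws0.
Qed.

Lemma Ws_sum R (I : Type) (r : seq I) (F : I -> E) :
  (forall i, Ws R (F i)) -> Ws R (\sum_(i <- r) F i).
Proof. by move=> HF; apply: big_ind => //; [exact: Ws0|exact: Ws_add]. Qed.

Lemma prod_bump (n : nat) (w : 'I_n -> E) (al : 'I_n -> nat) i0 :
  \prod_i w i ^+ (al i + (i == i0))%N = w i0 * \prod_i w i ^+ al i.
Proof.
under eq_bigr do rewrite exprD.
rewrite big_split /= mulrC; congr (_ * _).
rewrite (bigD1 i0) //= eqxx expr1 big1 ?mulr1 // => i /negbTE ->.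
by rewrite expr0.
Qed.

Lemma prod_add (n : nat) (w : 'I_n -> E) (al ga : 'I_n -> nat) :
  \prod_i w i ^+ (al i + ga i)%N = (\prod_i w i ^+ al i) * \prod_i w i ^+ ga i.
Proof. by under eq_bigr do rewrite exprD; rewrite big_split. Qed.

Lemma prod_set (n : nat) (w : 'I_n -> E) (al : 'I_n -> nat) i0 t :
  \prod_i w i ^+ (if i == i0 then t else al i) =
  w i0 ^+ t * \prod_(i | i != i0) w i ^+ al i.
Proof.
rewrite (bigD1 i0) //= eqxx; congr (_ * _).
by apply: eq_bigr => i /negbTE ->.
Qed.

Lemma Ws_mul_u R i y : Ws R y -> Ws R.+1 (u i * y).
Proof.
elim=> [|al be c y' Ha Hb Hy IH]; first by rewrite mulr0; exact: Ws0.
rewrite mulrDr mulrCA.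
have -> : u i * monval al be = monval (fun i' => al i' + (i' == i))%N be.
  by rewrite /monval prod_bump mulrA.
apply: WsM => // i'; rewrite -addn1 leq_add //; exact: leq_b1.
Qed.


Lemma Wu_mul R q al be : Wu q -> (forall i, (al i <= R)%N) -> (forall j, (be j < e)%N) ->
  Ws (R + Delta) (q * monval al be).
Proof.
move=> Hq Ha Hb; elim: Hq => [|ga c y Hg Hy IH]; first by rewrite mul0r; exact: Ws0.
rewrite mulrDl -mulrA.
have -> : (\prod_i u i ^+ ga i) * monval al be = monval (fun i => al i + ga i)%N be.
  by rewrite /monval prod_add mulrA [X in X * _]mulrC.
apply: WsM => // i; exact: leq_add.
Qed.

Hypothesis HR : forall j, exists l (q : 'I_l -> E) (t : 'I_l -> nat),
  (forall k, Wu (q k)) /\ (forall k, (t k < e)%N) /\ v j ^+ e = \sum_k q k * v j ^+ t k.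

Lemma Ws_mul_v_mon R j al be : (forall i, (al i <= R)%N) -> (forall j, (be j < e)%N) ->
  Ws (R + Delta) (v j * monval al be).
Proof.
move=> Ha Hb.
case: (ltnP (be j).+1 e) => Hj.
  have -> : v j * monval al be = monval al (fun j' => be j' + (j' == j))%N.
    by rewrite /monval prod_bump mulrCA.
  apply: Ws_mon => [i|j']; first by apply: leq_trans (Ha i) (leq_addr _ _).
  by case: eqP => [->|_]; rewrite ?addn1 ?addn0.
have Hbe : be j = e.-1.
  by have := Hb j; move: Hj; case: e => // e' H1 H2; apply/eqP; rewrite eqn_leq -ltnS H2 -ltnS.
have He : (0 < e)%N by apply: leq_ltn_trans (Hb j).
have [l [q [t [Hq [Ht Hv]]]]] := HR j.
have -> : v j * monval al be = \sum_k q k * monval al (fun j' => if j' == j then t k else be j').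
  rewrite /monval.
  under [RHS]eq_bigr do rewrite prod_set.
  rewrite mulrCA.
  transitivity (\prod_i u i ^+ al i * (v j ^+ e * \prod_(j' | j' != j) v j' ^+ be j')).
    by congr (_ * _); rewrite (bigD1 j) //= mulrA -exprS Hbe prednK.
  rewrite Hv big_distrl big_distrr /=; apply: eq_bigr => k _.
  ring.
apply: Ws_sum => k; apply: Wu_mul => // j'.
by case: eqP.
Qed.

Lemma Ws_mul_v R j y : Ws R y -> Ws (R + Delta) (v j * y).
Proof.
elim=> [|al be c y' Ha Hb Hy IH]; first by rewrite mulr0; exact: Ws0.
rewrite mulrDr mulrCA; apply: Ws_add => //.
apply: Ws_scale; exact: Ws_mul_v_mon.
Qed.


Definition Good c0 x := forall R y, Ws R y -> Ws (R + c0) (x * y).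

Lemma Good_mono c0 c1 x : (c0 <= c1)%N -> Good c0 x -> Good c1 x.
Proof. by move=> H G R y Hy; apply: Ws_mono (G R y Hy); rewrite leq_add2l. Qed.

Lemma Good_const c : Good 0 (kappa c).
Proof. by move=> R y Hy; rewrite addn0; apply: Ws_scale. Qed.

Lemma Good_u i : Good 1 (u i).
Proof. by move=> R y Hy; rewrite addn1; apply: Ws_mul_u. Qed.

Lemma Good_v j : Good Delta (v j).
Proof. by move=> R y Hy; apply: Ws_mul_v. Qed.

Lemma Good_add c0 c1 a b : Good c0 a -> Good c1 b -> Good (maxn c0 c1) (a + b).
Proof.
move=> Ga Gb R y Hy; rewrite mulrDl; apply: Ws_add.
  by apply: Ws_mono (Ga R y Hy); rewrite leq_add2l leq_maxl.
by apply: Ws_mono (Gb R y Hy); rewrite leq_add2l leq_maxr.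
Qed.

Lemma Good_mul c0 c1 a b : Good c0 a -> Good c1 b -> Good (c0 + c1) (a * b).
Proof.
move=> Ga Gb R y Hy; rewrite -mulrA (addnC c0) addnA; apply: Ga; exact: Gb.
Qed.

Definition uv : 'I_(N + M) -> E := fun i => match split i with inl j => u j | inr j => v j end.

Lemma Good_inP x : inP kappa uv x -> exists c0, Good c0 x.
Proof.
case=> f ->; apply: (gen_closure (P := fun x => exists c0, Good c0 x)).
- by move=> c; exists 0%N; apply: Good_const.
- by move=> a b [c0 Ha] [c1 Hb]; exists (maxn c0 c1); apply: Good_add.
- by move=> a b [c0 Ha] [c1 Hb]; exists (c0 + c1)%N; apply: Good_mul.
- move=> i; rewrite /uv; case: (split i) => j.
    by exists 1%N; apply: Good_u.
  by exists Delta; apply: Good_v.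
Qed.

Lemma Good_pow c0 x t : Good c0 x -> Good (t * c0) (x ^+ t).
Proof.
move=> G; elim: t => [|t IH]; first by move=> R y Hy; rewrite expr0 mul1r addn0.
by rewrite exprS mulSn; apply: Good_mul.
Qed.

Lemma Ws_one (He : (0 < e)%N) : Ws 0 1.
Proof.
have -> : (1 : E) = monval (fun _ => 0%N) (fun _ => 0%N).
  by rewrite /monval !big1 ?mulr1 // => i _; rewrite expr0.
by apply: Ws_mon.
Qed.

End Count.

Section LA.
Variables (K : fieldType) (E : fieldType) (kappa : {rmorphism K -> E}).

Lemma lin_dep (I J : finType) (T : I -> E) (S : J -> E) (A : I -> J -> K) :
  (forall i, T i = \sum_j kappa (A i j) * S j) -> (#|J| < #|I|)%N ->
  exists c : I -> K, (exists i, c i != 0) /\ \sum_i kappa (c i) * T i = 0.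
Proof.
move=> HT HIJ.
pose Mat : 'M[K]_(#|I|, #|J|) := \matrix_(a, b) A (enum_val a) (enum_val b).
have Hk : kermx Mat != 0.
  rewrite -mxrank_eq0 mxrank_ker subn_eq0 -ltnNge.
  by apply: leq_ltn_trans (rank_leq_col Mat) HIJ.
have [x Hx Hx0] := rowV0Pn Hk.
have Hxm : x *m Mat = 0 by apply/sub_kermxP.
exists (fun i => x 0 (enum_rank i)); split.
  case: (pickP (fun a => x 0 a != 0)) => [a Ha|Hall].
    by exists (enum_val a); rewrite enum_valK.
  exfalso; move/eqP: Hx0; apply; apply/rowP => a; rewrite mxE.
  by apply/eqP; move/negbFE: (Hall a).
have Hc : forall j, \sum_i x 0 (enum_rank i) * A i j = 0.
  move=> j; have := congr1 (fun X : 'M_(1, #|J|) => X 0 (enum_rank j)) Hxm.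
  rewrite mxE /= mxE => H; apply: (etrans _ H).
  rewrite (big_enum_val (A := I)); apply: eq_bigr => a _.
  by rewrite mxE enum_valK enum_rankK.
under eq_bigr do rewrite HT big_distrr /=.
rewrite exchange_big /= big1 // => j _.
under eq_bigr do rewrite mulrA.
rewrite -big_distrl /= -[RHS](mul0r (S j)); congr (_ * _).
transitivity (kappa (\sum_i x 0 (enum_rank i) * A i j)); last by rewrite Hc rmorph0.
by rewrite rmorph_sum; apply: eq_bigr => i _; rewrite rmorphM.
Qed.
End LA.

Section Box.
Variables (K : fieldType) (E : fieldType) (kappa : {rmorphism K -> E}).
Variables (N M : nat) (u : 'I_N -> E) (v : 'I_M -> E) (e : nat).

Definition Box R : finType := ({ffun 'I_N -> 'I_R.+1} * {ffun 'I_M -> 'I_e})%type.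
Definition monb R (p : Box R) : E := monval u v (fun i => p.1 i : nat) (fun j => p.2 j : nat).

Lemma card_Box R : #|Box R| = (R.+1 ^ N * e ^ M)%N.
Proof. by rewrite card_prod !card_ffun !card_ord. Qed.

Lemma Ws_box R y : Ws kappa u v e R y -> exists c : Box R -> K, y = \sum_p kappa (c p) * monb p.
Proof.
elim=> [|al be c0 y' Ha Hb Hy [c ->]].
  by exists (fun _ => 0); rewrite big1 // => p _; rewrite rmorph0 mul0r.
have Ha' : forall i, (al i < R.+1)%N by move=> i; rewrite ltnS.
pose p0 : Box R := ([ffun i => Ordinal (Ha' i)], [ffun j => Ordinal (Hb j)]).
have Hp0 : monb p0 = monval u v al be.
  by rewrite /monb /monval; congr (_ * _); apply: eq_bigr => i _; rewrite ffunE.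
exists (fun p => c p + (if p == p0 then c0 else 0)).
symmetry; under eq_bigr do rewrite rmorphD mulrDl.
rewrite big_split /= addrC; congr (_ + _).
rewrite (bigD1 p0) //= eqxx big1 ?addr0 ?Hp0 // => p /negbTE ->.
by rewrite rmorph0 mul0r.
Qed.

End Box.

Fixpoint BoxZ (D k : nat) : finType :=
  match k with 0 => unit | k'.+1 => (BoxZ D k' * 'I_D)%type end.

Lemma card_BoxZ D k : #|BoxZ D k| = (D ^ k)%N.
Proof. by elim: k => [|k IH] /=; rewrite ?card_unit // card_prod IH card_ord expnSr. Qed.

Section Zpoly.
Variables (K : fieldType) (E : fieldType) (kappa : {rmorphism K -> E}) (D : nat).

Fixpoint zval (k : nat) : ('I_k -> E) -> BoxZ D k -> E :=
  match k return ('I_k -> E) -> BoxZ D k -> E with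
  | 0 => fun _ _ => 1
  | k'.+1 => fun x al => zval (fun i => x (widen_ord (leqnSn k') i)) al.1 * x ord_max ^+ al.2
  end.

Fixpoint zpoly (k : nat) : BoxZ D k -> mpoly K k :=
  match k return BoxZ D k -> mpoly K k with
  | 0 => fun _ => 1
  | k'.+1 => fun al => ((zpoly al.1)%:P * 'X^(al.2) : {poly mpoly K k'})
  end.

Lemma meval_zpoly k (x : 'I_k -> E) al : meval kappa x (zpoly al) = zval x al.
Proof.
elim: k x al => [|k IH] x al /=; first exact: rmorph1.
rewrite map_meval rmorphM /= map_polyC map_polyXn hornerM hornerC hornerXn.
congr (_ * _); rewrite -IH; exact: mevalRE.
Qed.

Lemma zpoly_indep k (c : BoxZ D k -> K) :
  \sum_al mconst k (c al) * zpoly al = 0 -> forall al, c al = 0.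
Proof.
elim: k c => [|k IH] c /=.
  rewrite (bigD1 tt) //= big1 ?addr0 ?mulr1 => [H [] //|[] //].
move=> H0 [al t0].
pose c' := fun al => c (al, t0).
apply: (IH c'); have := congr1 (fun p : {poly mpoly K k} => p`_t0) H0.
rewrite coef0 coef_sum => H1; rewrite -[RHS]H1.
transitivity (\sum_al \sum_t ((mconst k (c (al, t)))%:P * ((zpoly al)%:P * 'X^t))`_t0); last first.
  by rewrite pair_big; apply: eq_bigr => -[al' t] _.
apply: eq_bigr => al' _.
rewrite (bigD1 t0) //= big1 ?addr0.
  by rewrite mulrA -polyCM coefCM coefXn eqxx mulr1.
move=> t /negbTE Ht; rewrite mulrA -polyCM coefCM coefXn.
suff -> : (nat_of_ord t0 == nat_of_ord t) = false by rewrite mulr0.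
by apply/negbTE; rewrite eq_sym; apply: contraFN Ht => /eqP /val_inj ->.
Qed.

End Zpoly.

Section Main.
Variables (K : fieldType) (E : fieldType) (kappa : {rmorphism K -> E}).
Variables (N M : nat) (u : 'I_N -> E) (v : 'I_M -> E) (e Delta : nat).
Hypothesis HR : forall j, exists l (q : 'I_l -> E) (t : 'I_l -> nat),
  (forall k, Wu kappa u Delta (q k)) /\ (forall k, (t k < e)%N) /\ v j ^+ e = \sum_k q k * v j ^+ t k.
Hypothesis He : (0 < e)%N.
Variable D : nat.

Fixpoint Tval (k : nat) : ('I_k -> E) -> ('I_k -> E) -> BoxZ D k -> E :=
  match k return ('I_k -> E) -> ('I_k -> E) -> BoxZ D k -> E with
  | 0 => fun _ _ _ => 1
  | k'.+1 => fun a b al =>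
      Tval (fun i => a (widen_ord (leqnSn k') i)) (fun i => b (widen_ord (leqnSn k') i)) al.1 *
      (a ord_max ^+ al.2 * b ord_max ^+ (D.-1 - al.2))
  end.

Fixpoint bpow (k : nat) : ('I_k -> E) -> E :=
  match k return ('I_k -> E) -> E with
  | 0 => fun _ => 1
  | k'.+1 => fun b => bpow (fun i => b (widen_ord (leqnSn k') i)) * b ord_max ^+ D.-1
  end.

Lemma bpow_neq0 k (b : 'I_k -> E) : (forall i, b i != 0) -> bpow b != 0.
Proof.
elim: k b => [|k IH] b Hb /=; first exact: oner_neq0.
by rewrite mulf_neq0 ?expf_neq0 // IH.
Qed.

Lemma Tval_eq k (a b : 'I_k -> E) al : (forall i, b i != 0) ->
  Tval a b al = zval (fun i => a i / b i) al * bpow b.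
Proof.
elim: k a b al => [|k IH] a b al Hb /=; first by rewrite mulr1.
rewrite IH //.
have Ht : (al.2 <= D.-1)%N by rewrite -ltnS (leq_trans (ltn_ord _)) // leqSpred.
have Hbt : b ord_max ^+ al.2 != 0 by rewrite expf_neq0.
rewrite -[in RHS](subnKC Ht) exprD expr_div_n.
by field.
Qed.

Lemma Tval_Ws c0 k (a b : 'I_k -> E) al :
  (forall i, Good kappa u v e c0 (a i)) -> (forall i, Good kappa u v e c0 (b i)) ->
  Ws kappa u v e (k * (D.-1 * c0)) (Tval a b al).
Proof.
elim: k a b al => [|k IH] a b al Ha Hb /=; first exact: Ws_one.
have Ht : (al.2 <= D.-1)%N by rewrite -ltnS (leq_trans (ltn_ord _)) // leqSpred.
have G : Good kappa u v e (D.-1 * c0) (a ord_max ^+ al.2 * b ord_max ^+ (D.-1 - al.2)).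
  rewrite -{1}(subnKC Ht) mulnDl; apply: Good_mul; exact: Good_pow.
rewrite mulrC mulSnr; apply: G; apply: IH => i; [exact: Ha|exact: Hb].
Qed.

End Main.

Lemma expn_mono (x y n : nat) : (x <= y)%N -> (x ^ n <= y ^ n)%N.
Proof. by move=> H; elim: n => // n IH; rewrite !expnS leq_mul. Qed.


Section Main2.
Variables (K : fieldType) (E : fieldType) (kappa : {rmorphism K -> E}).
Variables (N M : nat) (u : 'I_N -> E) (v : 'I_M -> E) (e Delta : nat).
Hypothesis HR : forall j, exists l (q : 'I_l -> E) (t : 'I_l -> nat),
  (forall k, Wu kappa u Delta (q k)) /\ (forall k, (t k < e)%N) /\ v j ^+ e = \sum_k q k * v j ^+ t k.
Hypothesis He : (0 < e)%N.

Lemma count_main k (a b : 'I_k -> E) c0 :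
  (forall i, b i != 0) ->
  (forall i, Good kappa u v e c0 (a i)) -> (forall i, Good kappa u v e c0 (b i)) ->
  indep kappa (fun i => a i / b i) -> (k <= N)%N.
Proof.
move=> Hb Ga Gb Hind.
rewrite leqNgt; apply/negP => HNk.
pose X := ((k * c0).+1 ^ N * e ^ M)%N.
pose D := X.+1.
pose R := (k * (D.-1 * c0))%N.
have Hcard : (#|Box N M e R| < #|BoxZ D k|)%N.
  rewrite card_Box card_BoxZ.
  have H1 : (R.+1 <= (k * c0).+1 * D)%N by rewrite /R /D /=; nia.
  have H2 : (R.+1 ^ N <= (k * c0).+1 ^ N * D ^ N)%N by rewrite -expnMn expn_mono.
  apply: (@leq_ltn_trans ((k * c0).+1 ^ N * D ^ N * e ^ M)%N); first by rewrite leq_mul2r H2 orbT.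
  apply: (@leq_trans (D ^ N.+1)); last by rewrite leq_pexp2l.
  by rewrite mulnAC -/X expnS ltn_mul2r /D ltnSn expn_gt0.
have HT : forall al : BoxZ D k, exists c : Box N M e R -> K,
    @Tval E D k a b al = \sum_p kappa (c p) * monb u v p.
  by move=> al; apply: Ws_box; apply: Tval_Ws.
have [A HA] := fin_all_exists HT.
have [c [[al0 Hal0] Hc]] := lin_dep HA Hcard.
have Hz : \sum_al kappa (c al) * zval (fun i => a i / b i) al = 0.
  have := Hc; under eq_bigr do rewrite Tval_eq // mulrA.
  by rewrite -big_distrl /= => /eqP; rewrite mulf_eq0 (negbTE (bpow_neq0 D Hb)) orbF => /eqP.
have HP : meval kappa (fun i => a i / b i) (\sum_al mconst k (c al) * @zpoly K D k al) = 0.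
  rewrite -mevalRE rmorph_sum -[RHS]Hz /=; apply: eq_bigr => al _.
  by rewrite rmorphM /= !mevalRE meval_mconst meval_zpoly.
have := zpoly_indep (Hind _ HP) al0.
by move/eqP: Hal0.
Qed.

End Main2.

Section WuLemmas.
Variables (K : fieldType) (E : fieldType) (kappa : {rmorphism K -> E}).
Variables (N : nat) (u : 'I_N -> E).

Lemma Wu_mono D1 D2 q : (D1 <= D2)%N -> Wu kappa u D1 q -> Wu kappa u D2 q.
Proof.
move=> HD; elim=> [|ga c y Hg Hy IH]; first exact: Wu0.
by apply: WuM => // i; apply: leq_trans (Hg i) HD.
Qed.

Lemma Wu_add D1 a b : Wu kappa u D1 a -> Wu kappa u D1 b -> Wu kappa u D1 (a + b).
Proof.
elim=> [|ga c y Hg Hy IH] Hb; first by rewrite add0r.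
by rewrite -addrA; apply: WuM => //; apply: IH.
Qed.

Lemma Wu_monmul D1 D2 ga c b : (forall i, (ga i <= D1)%N) -> Wu kappa u D2 b ->
  Wu kappa u (D1 + D2) (kappa c * \prod_i u i ^+ ga i * b).
Proof.
move=> Hg; elim=> [|ga' c' y Hg' Hy IH]; first by rewrite mulr0; exact: Wu0.
rewrite mulrDr.
have -> : kappa c * \prod_i u i ^+ ga i * (kappa c' * \prod_i u i ^+ ga' i) =
          kappa (c * c') * \prod_i u i ^+ (ga i + ga' i)%N.
  rewrite rmorphM prod_add; ring.
apply: WuM => // i; exact: leq_add.
Qed.

Lemma Wu_mul2 D1 D2 a b : Wu kappa u D1 a -> Wu kappa u D2 b -> Wu kappa u (D1 + D2) (a * b).
Proof.
move=> Ha Hb; elim: Ha => [|ga c y Hg Hy IH]; first by rewrite mul0r; exact: Wu0.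
rewrite mulrDl; apply: Wu_add => //; exact: Wu_monmul.
Qed.

Lemma Wu_const c : Wu kappa u 0 (kappa c).
Proof.
rewrite -[kappa c]addr0 -[kappa c]mulr1.
have -> : (1 : E) = \prod_i u i ^+ 0 by rewrite big1.
apply: WuM => //; exact: Wu0.
Qed.

Lemma Wu_var i : Wu kappa u 1 (u i).
Proof.
have -> : u i = kappa 1 * \prod_i' u i' ^+ (i' == i) + 0.
  rewrite rmorph1 mul1r addr0 (bigD1 i) //= eqxx expr1 big1 ?mulr1 // => j /negbTE ->.
  by rewrite expr0.
apply: WuM; [by move=> j; exact: leq_b1|exact: Wu0].
Qed.

Lemma Wu_inP q : inP kappa u q -> exists D1, Wu kappa u D1 q.
Proof.
case=> f ->; apply: (gen_closure (P := fun x => exists D1, Wu kappa u D1 x)).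
- by move=> c; exists 0%N; apply: Wu_const.
- move=> a b [D1 Ha] [D2 Hb]; exists (maxn D1 D2); apply: Wu_add.
    by apply: Wu_mono Ha; rewrite leq_maxl.
  by apply: Wu_mono Hb; rewrite leq_maxr.
- by move=> a b [D1 Ha] [D2 Hb]; exists (D1 + D2)%N; apply: Wu_mul2.
- by move=> i; exists 1%N; apply: Wu_var.
Qed.

End WuLemmas.

Section Norm.
Variables (K : fieldType) (E : fieldType) (kappa : {rmorphism K -> E}).

Lemma inP_opp p (u : 'I_p -> E) a : inP kappa u a -> inP kappa u (- a).
Proof.
move=> Ha; rewrite -mulN1r -(rmorph1 kappa) -rmorphN; apply: inP_mul => //; exact: inP_const.
Qed.

Lemma inP_exp p (u : 'I_p -> E) a t : inP kappa u a -> inP kappa u (a ^+ t).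
Proof.
move=> Ha; elim: t => [|t IH]; first by rewrite expr0 -(rmorph1 kappa); exact: inP_const.
by rewrite exprS; apply: inP_mul.
Qed.

Lemma alg_norm p (u : 'I_p -> E) y : AlgOver kappa u y -> exists c e0,
  [/\ c != 0, inP kappa u c, (0 < e0)%N &
  forall e, (e0 <= e)%N -> exists l (q : 'I_l -> E) (t : 'I_l -> nat),
    [/\ forall k, inP kappa u (q k), forall k, (t k < e)%N &
        (c * y) ^+ e = \sum_k q k * (c * y) ^+ t k]].
Proof.
case=> P [Hl Hr].
pose Pm := map_poly (mevalR kappa u) P.
have HPm : Pm = map_poly (meval kappa u) P by rewrite map_meval.
have Hlc : lead_coef Pm = meval kappa u (lead_coef P).
  by rewrite lead_coef_map_id0 ?rmorph0 ?mevalRE.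
set c := meval kappa u (lead_coef P) in Hl Hlc.
have Hy : Pm.[y] = 0 by rewrite HPm.
have HPm0 : Pm != 0 by rewrite -lead_coef_eq0 Hlc.
pose e0 := (size Pm).-1.
have Hs : size Pm = e0.+1 by rewrite prednK // size_poly_gt0.
have He0 : (0 < e0)%N.
  rewrite lt0n; apply/negP => /eqP He.
  move: Hy; rewrite horner_coef Hs He big_ord1 expr0 mulr1.
  have -> : Pm`_0 = lead_coef Pm by rewrite lead_coefE Hs He.
  by rewrite Hlc => /eqP; rewrite (negbTE Hl).
have Hpl : forall l, inP kappa u (Pm`_l).
  by move=> l; rewrite HPm coef_map_id0 ?meval0 //; exists (P`_l).
have Hc : inP kappa u c by exists (lead_coef P).
exists c, e0; split => // e He.
pose q := fun l : 'I_e0 => - (Pm`_l * c ^+ (e0.-1 - l)).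
pose t := fun l : 'I_e0 => (l + (e - e0))%N.
exists e0, q, t; split.
- by move=> l; apply: inP_opp; apply: inP_mul => //; apply: inP_exp.
- by move=> l; rewrite /t; have := ltn_ord l; lia.
have Hrel : c * y ^+ e0 = - \sum_(l < e0) Pm`_l * y ^+ l.
  move: Hy; rewrite horner_coef Hs big_ord_recr /=.
  have -> : Pm`_e0 = c by rewrite -Hlc lead_coefE Hs.
  by move/eqP; rewrite addrC addr_eq0 => /eqP.
have -> : (c * y) ^+ e = (c * y) ^+ (e - e0) * (c ^+ e0.-1 * (c * y ^+ e0)).
  by rewrite [c ^+ e0.-1 * _]mulrA -exprSr prednK // -exprMn -exprD subnK.
rewrite Hrel -sumrN !big_distrr /=; apply: eq_bigr => l _.
rewrite /q /t.
have Hle : (l <= e0.-1)%N by rewrite -ltnS prednK.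
rewrite (_ : c ^+ e0.-1 = c ^+ (e0.-1 - l) * c ^+ l); last by rewrite -exprD subnK.
rewrite exprD !exprMn.
move: (c ^+ (e0.-1 - l)) (c ^+ l) (y ^+ l) (c ^+ (e - e0)) (y ^+ (e - e0)) (Pm`_l) => A B C D F G.
ring.
Qed.

End Norm.

Section ThmT.
Variables (K : fieldType) (E : fieldType) (kappa : {rmorphism K -> E}).

Lemma uv_l N M (u : 'I_N -> E) (v : 'I_M -> E) j : uv u v (lshift M j) = u j.
Proof. by rewrite /uv split_lshift. Qed.
Lemma uv_r N M (u : 'I_N -> E) (v : 'I_M -> E) j : uv u v (rshift N j) = v j.
Proof. by rewrite /uv split_rshift. Qed.

Lemma indep_ext p (z z' : 'I_p -> E) : z =1 z' -> indep kappa z -> indep kappa z'.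
Proof. by move=> Hz Hi f Hf; apply: Hi; rewrite -[RHS]Hf; apply: meval_ext. Qed.

Lemma thmT N M (u : 'I_N -> E) (v : 'I_M -> E) :
  (forall j, AlgOver kappa u (v j)) ->
  forall k (z : 'I_k -> E), (forall i, inK kappa (uv u v) (z i)) -> indep kappa z -> (k <= N)%N.
Proof.
move=> Hal k z Hz Hind.
have [cf Hcf] := fin_all_exists (fun j => alg_norm (Hal j)).
have [ef Hef] := fin_all_exists Hcf.
pose e := (\max_j ef j).+1.
have He : (0 < e)%N by [].
pose v' := fun j => cf j * v j.
have Hrel : forall j, exists Dj, exists l (q : 'I_l -> E) (t : 'I_l -> nat),
    (forall k, Wu kappa u Dj (q k)) /\ (forall k, (t k < e)%N) /\ v' j ^+ e = \sum_k q k * v' j ^+ t k.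
  move=> j; have [_ _ _ Hj] := Hef j.
  have [l [q [t [Hq Ht Hr]]]] := Hj e (leq_trans (leq_bigmax j) (leqnSn _)).
  have [Df HDf] := fin_all_exists (fun k => Wu_inP (Hq k)).
  exists (\max_k Df k), l, q, t; split; last by split.
  by move=> k'; apply: Wu_mono (HDf k'); apply: leq_bigmax.
have [Dfj HDfj] := fin_all_exists Hrel.
pose Delta := \max_j Dfj j.
have HR : forall j, exists l (q : 'I_l -> E) (t : 'I_l -> nat),
    (forall k, Wu kappa u Delta (q k)) /\ (forall k, (t k < e)%N) /\ v' j ^+ e = \sum_k q k * v' j ^+ t k.
  move=> j; have [l [q [t [Hq Hr]]]] := HDfj j; exists l, q, t; split => //.
  by move=> k'; apply: Wu_mono (Hq k'); apply: leq_bigmax.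
have HuP : forall i, inP kappa (uv u v') (u i).
  by move=> i; rewrite -(uv_l u v'); apply: inP_var.
have Hcoord : forall i, inK kappa (uv u v') (uv u v i).
  move=> i; rewrite /uv; case: (split i) => j.
    by apply: inP_inK.
  have [Hc0 [f Hf] _ _] := Hef j.
  have -> : v j = v' j / cf j by rewrite /v' /= [cf j * _]mulrC mulfK.
  apply: inK_div => //; first by apply: inP_inK; rewrite -(uv_r u v'); apply: inP_var.
  apply: inP_inK; rewrite Hf; exact: inP_subst.
have Hz' : forall i, exists fg : mpoly K (N + M) * mpoly K (N + M),
    meval kappa (uv u v') fg.2 != 0 /\ z i = meval kappa (uv u v') fg.1 / meval kappa (uv u v') fg.2.
  move=> i; have [f [g [Hg ->]]] := Hz i.
  have Hf' := inK_subst Hcoord f; have Hg' := inK_subst Hcoord g.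
  have [f' [g' [Hg'' Ez]]] := inK_div Hf' Hg' Hg.
  by exists (f', g').
have [fg Hfg] := fin_all_exists Hz'.
pose a := fun i => meval kappa (uv u v') (fg i).1.
pose b := fun i => meval kappa (uv u v') (fg i).2.
have Hgood : forall i, exists c0, Good kappa u v' e c0 (a i) /\ Good kappa u v' e c0 (b i).
  move=> i.
  have [c1 G1] := Good_inP HR (ex_intro _ (fg i).1 erefl : inP kappa (uv u v') (a i)).
  have [c2 G2] := Good_inP HR (ex_intro _ (fg i).2 erefl : inP kappa (uv u v') (b i)).
  exists (maxn c1 c2); split; [apply: Good_mono G1|apply: Good_mono G2];
    by rewrite ?leq_maxl ?leq_maxr.
have [cg Hcg] := fin_all_exists Hgood.
pose c0 := \max_i cg i.
apply: (count_main He (c0 := c0) (a := a) (b := b)).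
- by move=> i; case: (Hfg i).
- by move=> i; apply: Good_mono (proj1 (Hcg i)); apply: leq_bigmax.
- by move=> i; apply: Good_mono (proj2 (Hcg i)); apply: leq_bigmax.
- by apply: indep_ext Hind => i; case: (Hfg i).
Qed.

End ThmT.

Section InKtrans.
Variables (K : fieldType) (E : fieldType) (kappa : {rmorphism K -> E}).

Lemma inK_trans p q (x : 'I_p -> E) (G : 'I_q -> E) y :
  (forall j, inK kappa x (G j)) -> inK kappa G y -> inK kappa x y.
Proof.
move=> HG [f [g [Hg ->]]]; apply: inK_div => //; exact: inK_subst.
Qed.

Lemma inK_var p (x : 'I_p -> E) i : inK kappa x (x i).
Proof. apply: inP_inK; exact: inP_var. Qed.

End InKtrans.

Section Part3.
Variables (K L : fieldType) (iota : {rmorphism K -> L}) (n s r : nat).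
Variable H : 'I_(s + r) -> mpoly L n.
Hypothesis hH : forall j : 'I_s, proj_image_apex iota H (@std_basis L s r j).

Definition kappaF : {rmorphism K -> FLx L n} := (@tofrac (mpoly L n) \o phiL iota n)%FUN.

Lemma coefFE : coefF iota n =1 kappaF.
Proof. by move=> c; rewrite /coefF /toF /kappaF /= coefLxE. Qed.

Lemma in_KG_E m (G : 'I_m -> mpoly L n) z :
  in_KG iota G z <-> inK kappaF (fun i => toF (G i)) z.
Proof.
have E1 : forall f, meval (coefF iota n) (fun i => toF (G i)) f = meval kappaF (fun i => toF (G i)) f.
  by move=> f; apply: meval_ext => // c; rewrite coefFE.
split => [[f [g [Hg Hz]]]|[f [g [Hg Hz]]]]; exists f, g; by rewrite ?E1 // -?E1.
Qed.

Lemma alg_indep_E k (z : 'I_k -> FLx L n) : alg_indep iota z <-> indep kappaF z.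
Proof.
have E1 : forall f, meval (coefF iota n) z f = meval kappaF z f.
  by move=> f; apply: meval_ext => // c; rewrite coefFE.
by split => Hi f Hf; apply: Hi; rewrite ?E1 // -?E1.
Qed.

Lemma mevalF m (G : 'I_m -> mpoly L n) f :
  meval kappaF (fun i => toF (G i)) f = toF (meval (phiL iota n) G f).
Proof. by rewrite /toF meval_comp. Qed.


Lemma part3 : exists d : nat,
  trdeg_is iota (fun i : 'I_r => H (rshift s i)) d /\ trdeg_is iota H (d + s)%N.
Proof.
pose xF := fun i => toF (H i).
pose xF' := fun i : 'I_r => toF (H (rshift s i)).
have [d [sg [Hi Ha]]] := max_sub (kappaF) xF'.
exists d; split.
  split.
    exists (fun i => xF' (sg i)); split.
      by move=> i; apply/in_KG_E; exact: (inK_var (kappaF) xF' (sg i)).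
    by apply/alg_indep_E.
  move=> k z Hz Hzi.
  apply: (thmT (u := fun i => xF' (sg i)) (v := xF') Ha (z := z)); last by apply/alg_indep_E.
  move=> i; apply: (inK_trans (G := xF')); last by move/in_KG_E: (Hz i).
  by move=> j; rewrite -(uv_r (fun i => xF' (sg i)) xF'); apply: inK_var.
pose y := fun i : 'I_(d + s) => match split i with inl j => xF' (sg j) | inr j => xF (lshift r j) end.
split.
  exists y; split.
    move=> i; apply/in_KG_E; rewrite /y; case: (split i) => j.
      exact: (inK_var (kappaF) xF (rshift s (sg j))).
    exact: inK_var.
  apply/alg_indep_E => Phi HPhi.
  pose ptA := fun i : 'I_(d + s) => match split i with inl j => H (rshift s (sg j)) | inr j => H (lshift r j) end.
  apply: (core3 (phi := phiL iota n) (G := H) (sg := sg)).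
  - by move=> j; apply: apex_conv.
  - move=> g Hg; apply: Hi.
    by rewrite (mevalF (fun i => H (rshift s (sg i)))) Hg /toF tofrac0.
  - apply/eqP; rewrite -(@tofrac_eq0 (mpoly L n)); apply/eqP.
    rewrite -[RHS]HPhi; apply: (etrans (esym (mevalF ptA Phi))); apply: meval_ext => // i.
    by rewrite /ptA /y; case: (split i).
move=> k z Hz Hzi.
apply: (thmT (u := y) (v := xF') _ (z := z)); last by apply/alg_indep_E.
  move=> j; apply: (alg_relabel (tau := lshift s)).
  apply: (alg_ext (w := fun i => xF' (sg i))); last exact: Ha.
  by move=> i; rewrite /y split_lshift.
move=> i; apply: (inK_trans (G := xF)); last by move/in_KG_E: (Hz i).
move=> j; rewrite -(splitK j); case: (split j) => j0 /=.
  have -> : xF (lshift r j0) = uv y xF' (lshift r (rshift d j0)).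
    by rewrite uv_l /y split_rshift.
  exact: inK_var.
have -> : xF (rshift s j0) = uv y xF' (rshift (d + s) j0) by rewrite uv_r.
exact: inK_var.
Qed.

End Part3.


Unset Implicit Arguments.

(* m = s + r ; H' = (H_{s+1},...,H_m) = fun i => H (rshift s i) *)
Theorem proposition3p8 (K L : fieldType) (iota : {rmorphism K -> L})
  (n s r : nat) (H : 'I_(s + r) -> mpoly L n)
  (hH : forall j : 'I_s, proj_image_apex iota H (@std_basis L s r j)) :
  (forall a : 'I_(s + r) -> L,
     image_apex iota H a <->
     image_apex iota (fun i : 'I_r => H (rshift s i)) (fun i => a (rshift s i)))
  /\
  (forall p : 'I_(s + r) -> L, (exists i : 'I_r, p (rshift s i) != 0) ->
     (proj_image_apex iota H p <->
      proj_image_apex iota (fun i : 'I_r => H (rshift s i)) (fun i => p (rshift s i))))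
  /\
  (exists d : nat,
     trdeg_is iota (fun i : 'I_r => H (rshift s i)) d /\
     trdeg_is iota H (d + s)%N).
Proof.
split; first by move=> a; exact: (part1 hH).
split; first by move=> p Hp; exact: (part2 hH Hp).
exact: (part3 hH).
Qed.
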